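(* The set $\{A\in\mathbb{A}\cap [e^{-e}, e^{1/e}] : h(A) \text{ is algebraic}\}$ is dense in $[e^{-e},e^{1/e}]$.
   Context: $\mathbb{A}$ denotes the set of algebraic numbers. For a real $x\in[e^{-e},e^{1/e}]$, the sequence $x,\ x^x,\ x^{x^x},\ldots$ converges; its limit is denoted $h(x)$, and it satisfies $h(x)=x^{h(x)}$, $1/e\leq h(x)\leq e$. *)

(* Defs.v *)
From Stdlib Require Import Reals List ZArith.
Open Scope R_scope.

(* Evaluation of an integer-coefficient polynomial given by its list of
   coefficients [c0; c1; ...; cn] (lowest degree first) at x. *)
Definition zpoly_eval (l : list Z) (x : R) : R :=
  fold_right (fun c acc => IZR c + x * acc) 0 l.

Definition is_algebraic (x : R) : Prop :=
  exists l : list Z, (exists c, In c l /\ c <> 0%Z) /\ zpoly_eval l x = 0.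

Fixpoint tower (x : R) (n : nat) : R :=
  match n with
  | O => x
  | S m => Rpower x (tower x m)
  end.

Definition tower_lo : R := exp (- exp 1).
Definition tower_hi : R := exp (/ exp 1).

(* Main.v *)
Require Import Defs.
From Stdlib Require Import Reals List ZArith Lra Lia Psatz.
Open Scope R_scope.

Lemma exp_le_mono : forall x y, x <= y -> exp x <= exp y.
Proof. intros x y H; destruct H as [H|H]; [left; apply exp_increasing; auto| subst; lra]. Qed.

Lemma ln_le_sub1 : forall x, 0 < x -> ln x <= x - 1.
Proof. intros x Hx. pose proof (exp_ineq1_le (ln x)). rewrite exp_ln in H; lra. Qed.

Lemma ln_le_div_e : forall y, 0 < y -> ln y <= y / exp 1.
Proof.
  intros y Hy. pose proof (exp_pos 1).
  assert (H1 : ln (y / exp 1) = ln y - 1).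
  { unfold Rdiv. rewrite ln_mult, ln_Rinv, ln_exp; auto. apply Rinv_0_lt_compat; auto. }
  pose proof (ln_le_sub1 (y / exp 1)). assert (0 < y / exp 1) by (apply Rdiv_lt_0_compat; auto).
  lra.
Qed.

Lemma key1 : forall x y, 0 < x -> x < y -> y < exp 1 -> ln x / x < ln y / y.
Proof.
  intros x y Hx Hxy Hy.
  set (t := y / x).
  assert (Ht : 1 < t). { unfold t. apply (Rmult_lt_reg_r x); auto. unfold Rdiv. rewrite Rmult_assoc, Rinv_l; lra. }
  assert (Hyt : y = x * t). { unfold t. field. lra. }
  assert (Hlny : ln y = ln x + ln t). { rewrite Hyt, ln_mult; lra. }
  assert (Hl1 : ln y < 1). { rewrite <- (ln_exp 1). apply ln_increasing; lra. }
  assert (Hlt : 1 - / t <= ln t).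
  { pose proof (ln_le_sub1 (/ t)). rewrite ln_Rinv in H; try lra.
    assert (0 < / t) by (apply Rinv_0_lt_compat; lra). specialize (H H0). lra. }
  assert (Htt : t * (1 - / t) = t - 1) by (field; lra).
  assert (Hmain : ln x * (t - 1) < ln t).
  { assert (ln x < 1 - ln t) by lra.
    assert (ln x * (t-1) < (1 - ln t) * (t - 1)) by (apply Rmult_lt_compat_r; lra).
    assert (t * (1 - / t) <= t * ln t) by (apply Rmult_le_compat_l; lra). nra. }
  apply (Rmult_lt_reg_r (x * y)). nra.
  replace (ln x / x * (x * y)) with (ln x * y) by (field; lra).
  replace (ln y / y * (x * y)) with (ln y * x) by (field; lra).
  rewrite Hlny, Hyt. nra.
Qed.

Lemma cv_le : forall u l b, Un_cv u l -> (forall n, u n <= b) -> l <= b.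
Proof.
  intros u l b Hu Hb. destruct (Rle_or_lt l b) as [H|H]; auto.
  destruct (Hu (l - b)) as [N HN]; [lra|]. specialize (HN N (le_n N)). specialize (Hb N).
  unfold R_dist in HN. apply Rabs_def2 in HN. lra.
Qed.

Lemma cv_ge : forall u l b, Un_cv u l -> (forall n, b <= u n) -> b <= l.
Proof.
  intros u l b Hu Hb. destruct (Rle_or_lt b l) as [H|H]; auto.
  destruct (Hu (b - l)) as [N HN]; [lra|]. specialize (HN N (le_n N)). specialize (Hb N).
  unfold R_dist in HN. apply Rabs_def2 in HN. lra.
Qed.

Lemma cv_shift : forall u l, Un_cv u l -> Un_cv (fun n => u (S n)) l.
Proof.
  intros u l H eps He. destruct (H eps He) as [N HN]. exists N. intros n Hn. apply HN; lia.
Qed.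

Lemma cv_even_odd : forall u l, Un_cv (fun k => u (2 * k)%nat) l -> Un_cv (fun k => u (S (2 * k))) l -> Un_cv u l.
Proof.
  intros u l H1 H2 eps He. destruct (H1 eps He) as [N1 HN1]. destruct (H2 eps He) as [N2 HN2].
  exists (2 * (N1 + N2) + 1)%nat. intros n Hn. destruct (even_odd_cor n) as [p [Hp|Hp]]; subst n.
  - apply HN1; lia.
  - apply HN2; lia.
Qed.

Lemma cont_of_lim : forall f x l, derivable_pt_lim f x l -> continuity_pt f x.
Proof. intros f x l H. apply derivable_continuous_pt. exists l. exact H. Qed.

Lemma Rpower_cont : forall A y, continuity_pt (fun z => Rpower A z) y.
Proof. intros A y. unfold Rpower. reg. Qed.
Lemma phi_cont : forall r, 0 < r -> continuity_pt (fun z => exp (/ z * ln z)) r.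
Proof. intros. apply continuity_pt_comp with (f1 := fun z => / z * ln z). 2: reg.
 apply continuity_pt_mult. apply continuity_pt_inv. reg. lra.
 apply derivable_continuous_pt. exists (/ r). apply derivable_pt_lim_ln; auto. Qed.

Lemma fix_r : forall r, 0 < r -> Rpower (Rpower r (/ r)) r = r.
Proof. intros r Hr. rewrite Rpower_mult, Rinv_l by lra. apply Rpower_1; auto. Qed.

Lemma lnA : forall r, ln (Rpower r (/ r)) = / r * ln r.
Proof. intros. apply ln_Rpower. Qed.

Lemma Rpower_pos : forall A y, 0 < Rpower A y.
Proof. intros; unfold Rpower; apply exp_pos. Qed.

Lemma Rpower_eq : forall A y, 0 < A -> Rpower A y = exp (y * ln A).
Proof. reflexivity. Qed.

Lemma conv_gt1 : forall r, 1 < r < exp 1 -> Un_cv (tower (Rpower r (/ r))) r.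
Proof.
  intros r [Hr1 Hre].
  set (A := Rpower r (/ r)).
  assert (HlnA : ln A = / r * ln r) by apply lnA.
  assert (Hlnr : 0 < ln r) by (rewrite <- ln_1; apply ln_increasing; lra).
  assert (Hir : 0 < / r < 1). { split. apply Rinv_0_lt_compat; lra. rewrite <- Rinv_1. apply Rinv_lt_contravar; lra. }
  assert (HlnApos : 0 < ln A) by (rewrite HlnA; nra).
  assert (HA1 : 1 < A). { unfold A, Rpower. rewrite <- exp_0. apply exp_increasing. nra. }
  assert (HAr : A <= r). { assert (A <= exp (ln r)). { unfold A, Rpower. apply exp_le_mono. nra. } rewrite exp_ln in H; lra. }
  assert (Hfr : Rpower A r = r) by (apply fix_r; lra).
  assert (mono : forall y z, y <= z -> Rpower A y <= Rpower A z).
  { intros y z Hyz. unfold Rpower. apply exp_le_mono. nra. }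
  assert (Hbd : forall n, A <= tower A n <= r).
  { induction n; simpl. lra. split.
    - rewrite <- (Rpower_1 A) at 1 by lra. apply mono; lra.
    - rewrite <- Hfr. apply mono; lra. }
  assert (Hgr : Un_growing (tower A)).
  { intro n. induction n. simpl. rewrite <- (Rpower_1 A) at 1 by lra. apply mono; lra.
    simpl. apply mono. exact IHn. }
  destruct (growing_cv _ Hgr) as [L HL].
  { exists r. intros x [i Hi]. subst x. apply Hbd. }
  assert (HL1 : Un_cv (fun n => Rpower A (tower A n)) (Rpower A L)) by (apply continuity_seq; [apply Rpower_cont | auto]).
  assert (HL2 : Un_cv (fun n => Rpower A (tower A n)) L) by (apply (cv_shift (tower A)); auto).
  assert (HfL : Rpower A L = L) by (apply (UL_sequence _ _ _ HL1 HL2)).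
  assert (HLr : L <= r) by (apply (cv_le _ _ _ HL); intro; apply Hbd).
  assert (HLA : A <= L) by (apply (cv_ge _ _ _ HL); intro; apply Hbd).
  replace r with L. exact HL.
  destruct HLr as [HLr|HLr]; auto. exfalso.
  assert (E1 : ln L = L * ln A). { rewrite <- HfL at 1. apply ln_Rpower. }
  assert (E2 : ln r = r * ln A). { rewrite HlnA. field. lra. }
  pose proof (key1 L r ltac:(lra) HLr Hre).
  replace (ln L / L) with (ln A) in H by (rewrite E1; field; lra).
  replace (ln r / r) with (ln A) in H by (rewrite E2; field; lra). lra.
Qed.
Lemma psi_deriv : forall c x, 0 < x < 1 -> derivable_pt_lim (fun z => ln (- ln z) + c * z) x (/ (- ln x) * (- / x) + c * 1).
Proof.
  intros c x Hx.
  assert (Hl : ln x < 0) by (rewrite <- ln_1; apply ln_increasing; lra).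
  apply (derivable_pt_lim_plus (fun z => ln (- ln z)) (fun z => c * z)).
  - apply (derivable_pt_lim_comp (fun z => - ln z) ln).
    + apply (derivable_pt_lim_opp ln). apply derivable_pt_lim_ln; lra.
    + apply derivable_pt_lim_ln; lra.
  - apply (derivable_pt_lim_scal id). apply derivable_pt_lim_id.
Qed.

Lemma two_cycle : forall c L1 L2, 0 < c < exp 1 -> 0 < L1 <= L2 -> L2 < 1 ->
  ln L2 = - c * L1 -> ln L1 = - c * L2 -> L1 = L2.
Proof.
  intros c L1 L2 Hc [H1 H12] H2 E2 E1.
  destruct H12 as [H12|]; auto. exfalso.
  destruct (MVT_cor2 (fun z => ln (- ln z) + c * z) (fun x => / (- ln x) * (- / x) + c * 1) L1 L2 H12)
    as [xi [Hxi Hr]].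
  { intros x Hx. apply psi_deriv. lra. }
  assert (P1 : ln (- ln L1) + c * L1 = ln c).
  { rewrite E1. replace (- (- c * L2)) with (c * L2) by ring. rewrite ln_mult by lra. rewrite E2. ring. }
  assert (P2 : ln (- ln L2) + c * L2 = ln c).
  { rewrite E2. replace (- (- c * L1)) with (c * L1) by ring. rewrite ln_mult by lra. rewrite E1. ring. }
  rewrite P1, P2 in Hxi.
  assert (Hl : ln xi < 0) by (rewrite <- ln_1; apply ln_increasing; lra).
  assert (Hs : xi * (- ln xi) <= / exp 1).
  { pose proof (ln_le_div_e (/ xi)). rewrite ln_Rinv in H by lra.
    assert (0 < / xi) by (apply Rinv_0_lt_compat; lra). specialize (H H0).
    pose proof (exp_pos 1).
    apply (Rmult_le_reg_l (/ xi)); auto. replace (/ xi * (xi * - ln xi)) with (- ln xi) by (field; lra).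
    replace (/ xi * / exp 1) with (/ xi / exp 1) by (unfold Rdiv; ring). lra. }
  assert (Hd : / (- ln xi) * (- / xi) + c * 1 < 0).
  { replace (/ (- ln xi) * (- / xi)) with (- / (xi * (- ln xi))) by (field; lra).
    assert (exp 1 <= / (xi * - ln xi)).
    { rewrite <- (Rinv_inv (exp 1)). apply Rinv_le_contravar. nra. auto. }
    lra. }
  nra.
Qed.

Lemma conv_lt1 : forall r, exp (-1) < r < 1 -> Un_cv (tower (Rpower r (/ r))) r.
Proof.
  intros r [Hr1 Hr2].
  pose proof (exp_pos (-1)) as He0.
  set (A := Rpower r (/ r)).
  assert (HlnA : ln A = / r * ln r) by apply lnA.
  assert (Hlnr : ln r < 0) by (rewrite <- ln_1; apply ln_increasing; lra).
  assert (Hlnr1 : -1 < ln r) by (rewrite <- (ln_exp (-1)); apply ln_increasing; lra).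
  assert (Hir : 1 < / r). { rewrite <- Rinv_1. apply Rinv_lt_contravar; lra. }
  assert (Hire : / r < exp 1). { replace (exp 1) with (/ exp (-1)). apply Rinv_lt_contravar; nra.
     rewrite <- exp_Ropp; f_equal; ring. }
  assert (HlnAneg : ln A < 0) by (rewrite HlnA; nra).
  assert (HA0 : 0 < A) by apply Rpower_pos.
  assert (HA1 : A < 1). { unfold A, Rpower. rewrite <- exp_0. apply exp_increasing. nra. }
  assert (HAr : A <= r). { assert (A <= exp (ln r)). { unfold A, Rpower. apply exp_le_mono. nra. } rewrite exp_ln in H; lra. }
  assert (Hfr : Rpower A r = r) by (apply fix_r; lra).
  assert (anti : forall y z, y <= z -> Rpower A z <= Rpower A y).
  { intros y z Hyz. unfold Rpower. apply exp_le_mono. nra. }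
  assert (Hpos : forall n, 0 < tower A n) by (intro n; destruct n; simpl; [lra | apply Rpower_pos]).
  assert (Ht1 : tower A 1 < 1). { simpl. unfold Rpower. rewrite <- exp_0. apply exp_increasing. nra. }
  assert (Hle1 : forall n, tower A n <= 1).
  { intro n; destruct n; simpl. lra. rewrite <- (Rpower_O A) by lra. apply anti. left; apply Hpos. }
  assert (HT2 : forall k, tower A (2 * S k) = Rpower A (tower A (S (2 * k)))).
  { intro k. replace (2 * S k)%nat with (S (S (2 * k))) by lia. reflexivity. }
  assert (Halt : forall k, tower A (2 * k) <= r /\ r <= tower A (S (2 * k))).
  { induction k.
    - simpl. split. lra. rewrite <- Hfr. apply anti; lra.
    - rewrite HT2. split.
      + rewrite <- Hfr. apply anti. apply IHk.
      + change (r <= Rpower A (tower A (2 * S k))). rewrite HT2. rewrite <- Hfr at 1. apply anti.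
        rewrite <- Hfr. apply anti. apply IHk. }
  assert (Hmon : forall k, tower A (2 * k) <= tower A (2 * S k) /\ tower A (S (2 * S k)) <= tower A (S (2 * k))).
  { induction k.
    - assert (tower A 0 <= tower A 2).
      { simpl tower. rewrite <- (Rpower_1 A) at 1 by lra. apply anti. apply (Hle1 1%nat). }
      split. exact H. simpl tower. simpl tower in H. apply anti. exact H.
    - destruct IHk as [I1 I2]. assert (tower A (2 * S k) <= tower A (2 * S (S k))).
      { rewrite (HT2 (S k)), (HT2 k). apply anti. exact I2. }
      split. exact H. simpl tower at 1. simpl tower at 2. apply anti. exact H. }
  set (u := fun k => tower A (2 * k)). set (v := fun k => tower A (S (2 * k))).
  destruct (growing_cv u) as [L1 HL1].
  { intro k. apply Hmon. }
  { exists r. intros x [i Hi]. subst x. apply Halt. }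
  destruct (decreasing_cv v) as [L2 HL2].
  { intro k. apply Hmon. }
  { exists (- r). intros x [i Hi]. subst x. unfold opp_seq, v. pose proof (Halt i). lra. }
  assert (C1 : Un_cv v (Rpower A L1)) by (apply (continuity_seq (fun z => Rpower A z) u); [apply Rpower_cont | auto]).
  assert (E2 : L2 = Rpower A L1) by (apply (UL_sequence v); auto).
  assert (C2 : Un_cv (fun k => u (S k)) (Rpower A L2)).
  { apply (Un_cv_ext (fun k => Rpower A (v k))). intro k. unfold u, v. rewrite HT2. reflexivity.
    apply (continuity_seq (fun z => Rpower A z) v); [apply Rpower_cont | auto]. }
  assert (E1 : L1 = Rpower A L2) by (apply (UL_sequence (fun k => u (S k))); auto; apply cv_shift; auto).
  assert (B1 : L1 <= r) by (apply (cv_le _ _ _ HL1); intro; apply Halt).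
  assert (B2 : r <= L2) by (apply (cv_ge _ _ _ HL2); intro; apply Halt).
  assert (Hu0 : forall k, A <= u k).
  { induction k. unfold u; simpl; lra. unfold u in *. pose proof (Hmon k). lra. }
  assert (Hv0 : forall k, v k <= tower A 1).
  { induction k. unfold v; simpl; lra. unfold v in *. pose proof (Hmon k). lra. }
  assert (B3 : A <= L1) by (apply (cv_ge _ _ _ HL1); exact Hu0).
  assert (B4 : L2 <= tower A 1) by (apply (cv_le _ _ _ HL2); exact Hv0).
  assert (Heq : L1 = L2).
  { apply (two_cycle (- ln A)). split; [lra|]. rewrite HlnA. nra. lra. lra.
    rewrite E2, ln_Rpower. ring. rewrite E1, ln_Rpower. ring. }
  apply cv_even_odd.
  - replace r with L1 by lra. exact HL1.
  - replace r with L2 by lra. exact HL2.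
Qed.

Lemma conv_all : forall r, exp (-1) < r < exp 1 -> Un_cv (tower (Rpower r (/ r))) r.
Proof.
  intros r Hr. destruct (Rtotal_order r 1) as [H|[H|H]].
  - apply conv_lt1; lra.
  - subst r. assert (E : Rpower 1 (/ 1) = 1) by (unfold Rpower; rewrite ln_1, Rmult_0_r; apply exp_0).
    rewrite E. assert (forall n, tower 1 n = 1).
    { induction n; simpl; auto. rewrite IHn. unfold Rpower; rewrite ln_1, Rmult_0_r; apply exp_0. }
    intros eps He. exists O. intros n _. rewrite H. unfold R_dist. rewrite Rminus_diag, Rabs_R0. lra.
  - apply conv_gt1; lra.
Qed.

Lemma eval_rep : forall k c x, zpoly_eval (repeat 0%Z k ++ c :: nil) x = x ^ k * IZR c.
Proof.
  induction k; intros; simpl. unfold zpoly_eval; simpl. ring.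
  unfold zpoly_eval in *. simpl. rewrite IHk. ring.
Qed.

Lemma alg_rat : forall n m : nat, (0 < n)%nat -> (0 < m)%nat ->
  is_algebraic (INR n / INR m) /\ is_algebraic (Rpower (INR n / INR m) (/ (INR n / INR m))).
Proof.
  intros n m Hn Hm.
  assert (Hn' : 0 < INR n) by (apply lt_0_INR; lia).
  assert (Hm' : 0 < INR m) by (apply lt_0_INR; lia).
  set (r := INR n / INR m).
  assert (Hr : 0 < r) by (unfold r; apply Rdiv_lt_0_compat; auto).
  split.
  - exists ((- Z.of_nat n)%Z :: Z.of_nat m :: nil). split.
    + exists (Z.of_nat m). split. simpl; auto. lia.
    + unfold zpoly_eval; simpl. rewrite opp_IZR, <- !INR_IZR_INZ. unfold r. field. lra.
  - set (A := Rpower r (/ r)).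
    assert (HA : A ^ n = r ^ m).
    { unfold A. rewrite <- Rpower_pow by apply Rpower_pos. rewrite Rpower_mult.
      replace (/ r * INR n) with (INR m). apply Rpower_pow; auto. unfold r. field. lra. }
    exists ((- (Z.of_nat n ^ Z.of_nat m))%Z :: repeat 0%Z (n - 1) ++ (Z.of_nat m ^ Z.of_nat m)%Z :: nil).
    split.
    + exists (Z.of_nat m ^ Z.of_nat m)%Z. split.
      * right. apply in_or_app. right. simpl; auto.
      * apply Z.pow_nonzero; lia.
    + change (zpoly_eval (?a :: ?l) A) with (IZR a + A * zpoly_eval l A).
      rewrite eval_rep, opp_IZR, <- !pow_IZR, <- !INR_IZR_INZ.
      replace (A * (A ^ (n - 1) * INR m ^ m)) with (A ^ n * INR m ^ m).
      rewrite HA. unfold r. rewrite <- Rpow_mult_distr. replace (INR n / INR m * INR m) with (INR n) by (field; lra). ring.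
      replace n with (S (n - 1)) at 1 by lia. simpl. ring.
Qed.

Lemma INR_Ztonat : forall z, (0 <= z)%Z -> INR (Z.to_nat z) = IZR z.
Proof. intros. rewrite INR_IZR_INZ, Z2Nat.id; auto. Qed.

Lemma rat_dense : forall x y, 0 < x -> x < y -> exists n m : nat, (0 < n)%nat /\ (0 < m)%nat /\ x < INR n / INR m < y.
Proof.
  intros x y Hx Hxy.
  destruct (archimed (/ (y - x))) as [Hm1 Hm2].
  assert (Hyx : 0 < / (y - x)) by (apply Rinv_0_lt_compat; lra).
  set (zm := up (/ (y - x))) in *.
  assert (Hzm : (0 < zm)%Z) by (apply lt_0_IZR; lra).
  set (M := IZR zm) in *.
  assert (HM : 1 < M * (y - x)).
  { replace 1 with (/ (y - x) * (y - x)) by (field; lra). apply Rmult_lt_compat_r; lra. }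
  destruct (archimed (x * M)) as [Hn1 Hn2].
  set (zn := up (x * M)) in *.
  assert (Hzn : (0 < zn)%Z) by (apply lt_0_IZR; nra).
  exists (Z.to_nat zn), (Z.to_nat zm). split; [lia|]. split; [lia|].
  rewrite !INR_Ztonat by lia. fold M. split.
  - apply (Rmult_lt_reg_r M); [lra|]. unfold Rdiv. rewrite Rmult_assoc, Rinv_l by lra. lra.
  - apply (Rmult_lt_reg_r M); [lra|]. unfold Rdiv. rewrite Rmult_assoc, Rinv_l by lra. nra.
Qed.

Lemma einv : / exp (-1) = exp 1.
Proof. rewrite <- exp_Ropp; f_equal; ring. Qed.

Lemma phi_lo : Rpower (exp (-1)) (/ exp (-1)) = tower_lo.
Proof. unfold Rpower, tower_lo. rewrite ln_exp, einv. f_equal; ring. Qed.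

Lemma phi_hi : Rpower (exp 1) (/ exp 1) = tower_hi.
Proof. unfold Rpower, tower_hi. rewrite ln_exp. f_equal; ring. Qed.

Lemma exists_r0 : forall a, tower_lo <= a <= tower_hi -> exists r0, exp (-1) <= r0 <= exp 1 /\ Rpower r0 (/ r0) = a.
Proof.
  intros a [H1 H2].
  assert (He : exp (-1) < exp 1) by (apply exp_increasing; lra).
  pose proof (exp_pos (-1)).
  destruct H1 as [H1|H1]; [| exists (exp (-1)); split; [lra | rewrite phi_lo; auto]].
  destruct H2 as [H2|H2]; [| exists (exp 1); split; [lra | rewrite phi_hi; auto]].
  destruct (Ranalysis5.IVT_interv (fun z => Rpower z (/ z) - a) (exp (-1)) (exp 1)) as [z [Hz Hfz]].
  - intros b Hb. apply continuity_pt_minus. apply phi_cont. lra. apply continuity_pt_const. intros u v; reflexivity.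
  - exact He.
  - rewrite phi_lo. lra.
  - rewrite phi_hi. lra.
  - exists z. split; auto. lra.
Qed.

Theorem theorem2p4 :
  forall a eps : R, tower_lo <= a <= tower_hi -> 0 < eps ->
  exists A : R,
    is_algebraic A /\ tower_lo <= A <= tower_hi /\ Rabs (A - a) < eps /\
    exists hA : R, Un_cv (tower A) hA /\ is_algebraic hA.
Proof.
  intros a eps Ha Heps.
  destruct (exists_r0 a Ha) as [r0 [Hr0 Hphi]].
  pose proof (exp_pos (-1)) as He0.
  assert (He : exp (-1) < exp 1) by (apply exp_increasing; lra).
  destruct (phi_cont r0 ltac:(lra) eps Heps) as [del [Hdel Hc]].
  set (x := Rmax (exp (-1)) (r0 - del)). set (y := Rmin (exp 1) (r0 + del)).
  assert (Hx1 : exp (-1) <= x) by apply Rmax_l. assert (Hx2 : r0 - del <= x) by apply Rmax_r.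
  assert (Hy1 : y <= exp 1) by apply Rmin_l. assert (Hy2 : y <= r0 + del) by apply Rmin_r.
  assert (Hxy : x < y).
  { unfold x, y. apply Rmax_lub_lt; apply Rmin_glb_lt; lra. }
  assert (Hx3 : x = exp (-1) \/ x = r0 - del) by (unfold x, Rmax; destruct Rle_dec; auto).
  assert (Hy3 : y = exp 1 \/ y = r0 + del) by (unfold y, Rmin; destruct Rle_dec; auto).
  destruct (rat_dense x y ltac:(lra) Hxy) as [n [m [Hn [Hm Hr]]]].
  set (r := INR n / INR m) in *.
  destruct (alg_rat n m Hn Hm) as [Halgr HalgA]. fold r in Halgr, HalgA.
  assert (Hre : exp (-1) < r < exp 1) by lra.
  assert (Hr0' : 0 < r) by lra.
  exists (Rpower r (/ r)). split; [exact HalgA|]. split; [|split].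
  - assert (Hir : 0 < / r < exp 1).
    { split. apply Rinv_0_lt_compat; lra. rewrite <- einv. apply Rinv_lt_contravar; nra. }
    assert (Hlnr1 : -1 < ln r) by (rewrite <- (ln_exp (-1)); apply ln_increasing; lra).
    unfold tower_lo, tower_hi, Rpower. split; apply exp_le_mono.
    + destruct (Rle_or_lt 0 (ln r)).
      * pose proof (exp_pos 1). nra.
      * nra.
    + pose proof (ln_le_div_e r Hr0'). pose proof (exp_pos 1).
      apply (Rmult_le_reg_l r); auto. rewrite <- Rmult_assoc, Rinv_r by lra.
      replace (r * / exp 1) with (r / exp 1) by reflexivity. lra.
  - rewrite <- Hphi. destruct (Req_dec r r0) as [E|E].
    + rewrite E, Rminus_diag, Rabs_R0; auto.
    + apply (Hc r). split. split. exact I. auto. simpl. unfold R_dist. apply Rabs_def1; lra.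
  - exists r. split; auto. apply conv_all; auto.
Qed.
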